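(* Let $A\in\mathbb{R}^{m\times n}$ with $m>n$ be a full-rank standardized matrix with no two distinct rows parallel. Let $x\in\mathbb{R}^n$, $w\in\mathbb{R}^m$, and $b=Ax+w$. Let $x_k$ denote the $k$-th iterate of the two-subspace Kaczmarz method applied to $(A,b)$ from a deterministic starting point $x_0$. Then for every $k\ge0$, $$\mathbb{E}\|x-x_k\|_2\le\eta^{k/2}\|x-x_0\|_2+\frac{3}{1-\sqrt\eta}\cdot\frac{\|w\|_\infty}{\sqrt{1-\Delta^2}},$$ where $\eta=\left(1-\frac1R\right)^2-\frac DR$ and $D=\min\left\{\frac{\delta^2(1-\delta)}{1+\delta},\frac{\Delta^2(1-\Delta)}{1+\Delta}\right\}$.
   Context: $A\in\mathbb{R}^{m\times n}$ has rows $a_1,\dots,a_m$. It is called standardized if $\|a_i\|_2=1$ for all $i$. ''No two distinct rows parallel'' means $|\langle a_r,a_s\rangle|<1$ for all $r\ne s$. $\|w\|_\infty$ denotes the largest absolute value of an entry of $w$. Two-subspace Kaczmarz method for $(A,b)$, $b\in\mathbb{R}^m$: start from $x_0\in\mathbb{R}^n$. For $k=1,2,\dots$, choose an ordered pair $(r,s)$ of distinct indices in $\{1,\dots,m\}$ uniformly at random among the $m^2-m$ such pairs, independently of all previous choices. Then set $\mu_k=\langle a_r,a_s\rangle$, $y_k=x_{k-1}+(b_s-\langle x_{k-1},a_s\rangle)a_s$, $v_k=\frac{a_r-\mu_k a_s}{\sqrt{1-\mu_k^2}}$, $\beta_k=\frac{b_r-b_s\mu_k}{\sqrt{1-\mu_k^2}}$,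 and $x_k=y_k+(\beta_k-\langle y_k,v_k\rangle)v_k$. Coherence parameters: $\Delta=\max_{j\ne k}|\langle a_j,a_k\rangle|$ and $\delta=\min_{j\ne k}|\langle a_j,a_k\rangle|$. Scaled condition number: $R=\|A\|_F^2\|A^{-1}\|^2$, where $\|A^{-1}\|=\inf\{M: M\|Az\|_2\ge\|z\|_2\ \text{for all } z\}$, i.e. the reciprocal of the smallest singular value of $A$. *)

(* Defs.v *)
From Stdlib Require Import Reals Lra List.
Open Scope R_scope.

(* vectors in R^n : nat -> R (only indices < n matter);
   matrices in R^{m x n} : nat -> nat -> R, entry (i,j) = A i j. *)

Fixpoint rsum (n : nat) (f : nat -> R) : R :=
  match n with O => 0 | S p => rsum p f + f p end.

Definition dot (n : nat) (u v : nat -> R) : R := rsum n (fun j => u j * v j).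
Definition norm2 (n : nat) (u : nat -> R) : R := sqrt (dot n u u).
Definition vsub (u v : nat -> R) : nat -> R := fun j => u j - v j.

Definition row (A : nat -> nat -> R) (i : nat) : nat -> R := fun j => A i j.
Definition matvec (n : nat) (A : nat -> nat -> R) (z : nat -> R) : nat -> R :=
  fun i => dot n (row A i) z.

Fixpoint linf (m : nat) (w : nat -> R) : R :=
  match m with O => 0 | S p => Rmax (linf p w) (Rabs (w p)) end.

Definition frob2 (m n : nat) (A : nat -> nat -> R) : R :=
  rsum m (fun i => dot n (row A i) (row A i)).

Definition standardized (m n : nat) (A : nat -> nat -> R) : Prop :=
  forall i, (i < m)%nat -> norm2 n (row A i) = 1.

Definition no_parallel_rows (m n : nat) (A : nat -> nat -> R) : Prop :=
  forall r s, (r < m)%nat -> (s < m)%nat -> r <> s ->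
    Rabs (dot n (row A r) (row A s)) < 1.

Definition full_rank (m n : nat) (A : nat -> nat -> R) : Prop :=
  forall z : nat -> R,
    (forall i, (i < m)%nat -> matvec n A z i = 0) ->
    forall j, (j < n)%nat -> z j = 0.

Definition pairs (m : nat) : list (nat * nat) :=
  filter (fun p => negb (Nat.eqb (fst p) (snd p))) (list_prod (seq 0 m) (seq 0 m)).

(* Delta = max_{j<>k} |<a_j,a_k>|,  delta = min_{j<>k} |<a_j,a_k>|
   (initial values 0 resp. 1 are harmless: all such values lie in [0,1)
   under the standing hypotheses and the list of pairs is nonempty). *)
Definition coh_max (m n : nat) (A : nat -> nat -> R) : R :=
  fold_right (fun p acc => Rmax (Rabs (dot n (row A (fst p)) (row A (snd p)))) acc)
    0 (pairs m).
Definition coh_min (m n : nat) (A : nat -> nat -> R) : R :=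
  fold_right (fun p acc => Rmin (Rabs (dot n (row A (fst p)) (row A (snd p)))) acc)
    1 (pairs m).

(* the set {M : M ||Az|| >= ||z|| for all z}; ||A^{-1}|| is its infimum *)
Definition inv_bound_set (m n : nat) (A : nat -> nat -> R) (M : R) : Prop :=
  forall z : nat -> R, M * norm2 m (matvec n A z) >= norm2 n z.

Definition is_infimum (E : R -> Prop) (l : R) : Prop :=
  (forall x, E x -> l <= x) /\ (forall c, (forall x, E x -> c <= x) -> c <= l).

Definition tsk_step (n : nat) (A : nat -> nat -> R) (b : nat -> R)
    (rs : nat * nat) (x : nat -> R) : nat -> R :=
  let r := fst rs in let s := snd rs in
  let ar := row A r in let as_ := row A s in
  let mu := dot n ar as_ in
  let y := fun j => x j + (b s - dot n x as_) * as_ j in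
  let v := fun j => (ar j - mu * as_ j) / sqrt (1 - mu ^ 2) in
  let beta := (b r - b s * mu) / sqrt (1 - mu ^ 2) in
  fun j => y j + (beta - dot n y v) * v j.

Fixpoint tsk_iter (n : nat) (A : nat -> nat -> R) (b : nat -> R)
    (x0 : nat -> R) (l : list (nat * nat)) : nat -> R :=
  match l with
  | nil => x0
  | p :: l' => tsk_iter n A b (tsk_step n A b p x0) l'
  end.

(* expectation of F over k i.i.d. uniform choices of ordered pairs of distinct
   indices in {0..m-1} (uniform over the (m^2-m)^k sequences) *)
Fixpoint expect_pairs (m k : nat) (F : list (nat * nat) -> R) : R :=
  match k with
  | O => F nil
  | S k' => / INR (m * m - m) *
      fold_right (fun p acc => expect_pairs m k' (fun l => F (p :: l)) + acc)
        0 (pairs m)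
  end.

(* Main.v *)
Require Import Defs.
From Stdlib Require Import Reals List Lra Lia Psatz Classical.
Open Scope R_scope.

Lemma rsum_ext n f g : (forall j, (j < n)%nat -> f j = g j) -> rsum n f = rsum n g.
Proof.
  induction n as [|n IH]; intros H; simpl; [reflexivity|].
  rewrite (IH (fun j Hj => H j ltac:(lia))), (H n ltac:(lia)). reflexivity.
Qed.

Lemma rsum_le n f g : (forall j, (j < n)%nat -> f j <= g j) -> rsum n f <= rsum n g.
Proof.
  induction n as [|n IH]; intros H; simpl; [lra|].
  specialize (IH (fun j Hj => H j ltac:(lia))). specialize (H n ltac:(lia)). lra.
Qed.

Lemma rsum_plus n f g : rsum n (fun j => f j + g j) = rsum n f + rsum n g.
Proof. induction n; simpl; [ring| rewrite IHn; ring]. Qed.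

Lemma rsum_scal n c f : rsum n (fun j => c * f j) = c * rsum n f.
Proof. induction n; simpl; [ring| rewrite IHn; ring]. Qed.

Lemma rsum_const n c : rsum n (fun _ => c) = INR n * c.
Proof. induction n; simpl rsum; [simpl; ring| rewrite IHn, S_INR; ring]. Qed.

Lemma rsum_swap m k F :
  rsum m (fun r => rsum k (fun s => F r s)) = rsum k (fun s => rsum m (fun r => F r s)).
Proof.
  induction m; simpl.
  - induction k; simpl; [ring| rewrite <- IHk; ring].
  - rewrite IHm, <- rsum_plus. reflexivity.
Qed.

Lemma dot_sym n u v : dot n u v = dot n v u.
Proof. unfold dot; apply rsum_ext; intros; ring. Qed.

Lemma dot_ext n u u' v v' : (forall j, (j < n)%nat -> u j = u' j) ->
  (forall j, (j < n)%nat -> v j = v' j) -> dot n u v = dot n u' v'.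
Proof. intros H1 H2; unfold dot; apply rsum_ext; intros; rewrite H1, H2; auto. Qed.

Lemma dot_ge0 n u : 0 <= dot n u u.
Proof. unfold dot; induction n; simpl; nra. Qed.

Lemma dot_lin2l n c1 c2 u v w :
  dot n (fun j => c1 * u j + c2 * v j) w = c1 * dot n u w + c2 * dot n v w.
Proof. unfold dot; induction n; simpl; [ring| rewrite IHn; ring]. Qed.

Lemma dot_lin2r n c1 c2 u v w :
  dot n w (fun j => c1 * u j + c2 * v j) = c1 * dot n w u + c2 * dot n w v.
Proof. unfold dot; induction n; simpl; [ring| rewrite IHn; ring]. Qed.

Lemma dot_sq3 n c1 c2 c3 u1 u2 u3 :
  dot n (fun j => c1 * u1 j + c2 * u2 j + c3 * u3 j) (fun j => c1 * u1 j + c2 * u2 j + c3 * u3 j)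
  = c1^2 * dot n u1 u1 + c2^2 * dot n u2 u2 + c3^2 * dot n u3 u3
    + 2*c1*c2 * dot n u1 u2 + 2*c1*c3 * dot n u1 u3 + 2*c2*c3 * dot n u2 u3.
Proof. unfold dot; induction n; simpl; [ring| rewrite IHn; ring]. Qed.

Lemma dot_sq2 n c1 c2 u1 u2 :
  dot n (fun j => c1 * u1 j + c2 * u2 j) (fun j => c1 * u1 j + c2 * u2 j)
  = c1^2 * dot n u1 u1 + c2^2 * dot n u2 u2 + 2*c1*c2 * dot n u1 u2.
Proof. unfold dot; induction n; simpl; [ring| rewrite IHn; ring]. Qed.

Lemma norm2_sq n u : norm2 n u ^ 2 = dot n u u.
Proof. unfold norm2. rewrite pow2_sqrt; auto using dot_ge0. Qed.


Lemma step_sq (n : nat) (A : nat -> nat -> R) (x w x0 : nat -> R) (r s : nat)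
 (hr : dot n (row A r) (row A r) = 1) (hs : dot n (row A s) (row A s) = 1)
 (hmu : Rabs (dot n (row A r) (row A s)) < 1) :
 let b := fun i => matvec n A x i + w i in
 let mu := dot n (row A r) (row A s) in
 let e := vsub x x0 in
 let al := fun i => dot n (row A i) e in
 dot n (vsub x (tsk_step n A b (r,s) x0)) (vsub x (tsk_step n A b (r,s) x0))
 = dot n e e - (al s)^2 - ((al r - mu * al s)/sqrt(1-mu^2))^2
   + (w s)^2 + ((w r - mu * w s)/sqrt(1-mu^2))^2.
Proof.
  intros b mu e al.
  assert (Hq: 0 < 1 - mu^2).
  { apply Rabs_def2 in hmu. unfold mu in *. nra. }
  unfold tsk_step. cbn [fst snd]. cbv zeta.
  fold mu.
  set (sq := sqrt (1 - mu^2)).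
  assert (Hsq: sq * sq = 1 - mu^2) by (apply sqrt_sqrt; lra).
  assert (Hsp: 0 < sq) by (apply sqrt_lt_R0; lra).
  set (ar := row A r) in *. set (as_ := row A s) in *.
  set (v := fun j => (ar j - mu * as_ j) / sq).
  assert (Hv : forall j, v j = (1/sq) * ar j + (-mu/sq) * as_ j).
  { intro j; unfold v; field; lra. }
  assert (Hvv : dot n v v = 1).
  { rewrite (dot_ext n v (fun j => (1/sq) * ar j + (-mu/sq) * as_ j) v (fun j => (1/sq) * ar j + (-mu/sq) * as_ j)) by auto.
    rewrite dot_sq2, hr, hs. fold mu.
    replace ((1 / sq) ^ 2 * 1 + (- mu / sq) ^ 2 * 1 + 2 * (1 / sq) * (- mu / sq) * mu)
      with ((1 - mu^2)/(sq*sq)) by (field; lra).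
    rewrite Hsq; field; lra. }
  assert (Hsv : dot n as_ v = 0).
  { rewrite (dot_ext n as_ as_ v (fun j => (1/sq) * ar j + (-mu/sq) * as_ j)) by auto.
    rewrite dot_lin2r, hs, (dot_sym n as_ ar). fold mu. field; lra. }
  assert (Hev : forall z, dot n z v = (dot n ar z - mu * dot n as_ z) / sq).
  { intro z. rewrite (dot_ext n z z v (fun j => (1/sq) * ar j + (-mu/sq) * as_ j)) by auto.
    rewrite dot_lin2r, (dot_sym n z ar), (dot_sym n z as_). field; lra. }
  assert (He : forall z, dot n z e = dot n z x - dot n z x0).
  { intro z. rewrite (dot_ext n z z e (fun j => 1 * x j + (-1) * x0 j)) by (auto; intros j _; unfold e, vsub; ring).
    rewrite dot_lin2r; ring. }
  set (c := b s - dot n x0 as_).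
  set (y := fun j => x0 j + c * as_ j).
  set (g := (b r - b s * mu) / sq - dot n y v).

  rewrite (dot_ext n _ (fun j => 1 * e j + (-c) * as_ j + (-g) * v j) _ (fun j => 1 * e j + (-c) * as_ j + (-g) * v j)).
  2,3: intros j _; unfold e, y, v, vsub; ring.
  rewrite dot_sq3, Hvv, Hsv, hs.
  assert (Hc : c = al s + w s).
  { unfold c, al, b, matvec. fold as_. rewrite He, (dot_sym n x0 as_). ring. }
  assert (Hy : dot n y v = dot n x0 v).
  { unfold y. rewrite (dot_ext n _ (fun j => 1 * x0 j + c * as_ j) v v) by (intros; ring; auto).
    rewrite dot_lin2l, Hsv. ring. }
  assert (Hg : g = (al r - mu * al s)/sq + (w r - mu * w s)/sq).
  { unfold g. rewrite Hy, Hev. unfold b, matvec, al. fold ar as_. rewrite !He.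
    field; lra. }
  rewrite (dot_sym n e as_), Hev, Hc, Hg.
  change (dot n ar e) with (al r). change (dot n as_ e) with (al s).
  ring.
Qed.


Definition lsum {T} (l : list T) (F : T -> R) : R := fold_right (fun p acc => F p + acc) 0 l.

Lemma lsum_le {T} (l : list T) F G : (forall p, In p l -> F p <= G p) -> lsum l F <= lsum l G.
Proof.
  induction l as [|a l IH]; intros H; simpl; [lra|].
  assert (H1 := H a (or_introl eq_refl)).
  assert (H2 : lsum l F <= lsum l G) by (apply IH; intros; apply H; right; auto).
  unfold lsum in *; simpl; lra.
Qed.

Lemma lsum_plus {T} (l : list T) F G : lsum l (fun p => F p + G p) = lsum l F + lsum l G.
Proof. induction l; unfold lsum in *; simpl; [ring|]. rewrite IHl; ring. Qed.

Lemma lsum_scal {T} (l : list T) c F : lsum l (fun p => c * F p) = c * lsum l F.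
Proof. induction l; unfold lsum in *; simpl; [ring|]. rewrite IHl; ring. Qed.

Lemma lsum_app {T} (l1 l2 : list T) F : lsum (l1 ++ l2) F = lsum l1 F + lsum l2 F.
Proof. induction l1; unfold lsum in *; simpl; [ring|]. rewrite IHl1; ring. Qed.

Lemma lsum_map {T U} (l : list T) (h : T -> U) F : lsum (map h l) F = lsum l (fun p => F (h p)).
Proof. induction l; unfold lsum in *; simpl; [ring|]. rewrite IHl; ring. Qed.

Lemma lsum_filter {T} (l : list T) f F :
  lsum (filter f l) F = lsum l (fun p => if f p then F p else 0).
Proof. induction l; unfold lsum in *; simpl; [ring|]. destruct (f a); simpl; rewrite IHl; ring. Qed.

Lemma lsum_ext {T} (l : list T) F G : (forall p, In p l -> F p = G p) -> lsum l F = lsum l G.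
Proof.
  induction l as [|a l IH]; intros H; unfold lsum in *; simpl; [ring|].
  rewrite (H a (or_introl eq_refl)). rewrite IH; auto.
  intros; apply H; right; auto.
Qed.

Lemma lsum_prod {T U} (l1 : list T) (l2 : list U) G :
  lsum (list_prod l1 l2) G = lsum l1 (fun a => lsum l2 (fun b => G (a,b))).
Proof.
  induction l1; [unfold lsum; simpl; ring|]. simpl. rewrite lsum_app, lsum_map. rewrite IHl1. unfold lsum; simpl. ring.
Qed.

Lemma lsum_seq m H : lsum (seq 0 m) H = rsum m H.
Proof.
  induction m; [unfold lsum; simpl; ring|]. rewrite seq_S, lsum_app, IHm. unfold lsum; simpl. ring.
Qed.

Lemma rsum_minus n f g : rsum n (fun j => f j - g j) = rsum n f - rsum n g.
Proof. induction n; simpl; [ring| rewrite IHn; ring]. Qed.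

Lemma rsum_skip k r G : (r < k)%nat ->
  rsum k (fun s => if negb (Nat.eqb r s) then G s else 0) = rsum k G - G r.
Proof.
  induction k; intros Hr; [lia|]. simpl.
  destruct (Nat.eq_dec r k) as [->|Hne].
  - rewrite Nat.eqb_refl. simpl.
    rewrite (rsum_ext k _ G). ring.
    intros j Hj. destruct (Nat.eqb k j) eqn:E; [apply Nat.eqb_eq in E; lia| reflexivity].
  - assert (E : Nat.eqb r k = false) by (apply Nat.eqb_neq; auto). rewrite E. simpl.
    rewrite IHk by lia. ring.
Qed.

Lemma lsum_pairs m F :
  lsum (pairs m) F = rsum m (fun r => rsum m (fun s => F (r,s))) - rsum m (fun r => F (r,r)).
Proof.
  unfold pairs. rewrite lsum_filter, lsum_prod, lsum_seq.
  rewrite <- rsum_minus. apply rsum_ext. intros r Hr.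
  rewrite lsum_seq. simpl. apply (rsum_skip m r (fun s => F (r,s))). auto.
Qed.

Lemma In_pairs m p : In p (pairs m) -> (fst p < m)%nat /\ (snd p < m)%nat /\ fst p <> snd p.
Proof.
  unfold pairs. rewrite filter_In. destruct p as [r s]. simpl. rewrite in_prod_iff, !in_seq.
  intros [[H1 H2] H3]. apply Bool.negb_true_iff, Nat.eqb_neq in H3. lia.
Qed.

Lemma lsum_pairs_len m : (1 <= m)%nat -> lsum (pairs m) (fun _ => 1) = INR (m * m - m).
Proof.
  intros Hm. rewrite lsum_pairs. rewrite !rsum_const.
  rewrite minus_INR by nia. rewrite mult_INR. ring.
Qed.


Definition ff (x : R) := x^2 * (1 - x) / (1 + x).

Lemma ff_diff x y : 0 <= x -> 0 <= y ->
  ff x - ff y = (x - y) * (x + y - x^2 - y^2 - x^2*y - x*y^2) / ((1+x)*(1+y)).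
Proof. intros; unfold ff; field; lra. Qed.

Lemma ff_min dl Dl x : 0 <= dl -> dl <= x -> x <= Dl -> Dl < 1 ->
  Rmin (ff dl) (ff Dl) <= ff x.
Proof.
  intros H0 H1 H2 H3.
  destruct (Rle_or_lt (ff dl) (ff x)) as [Ha|Ha].
  { apply Rle_trans with (ff dl); auto. apply Rmin_l. }
  apply Rle_trans with (ff Dl); [apply Rmin_r|].
  set (K := fun y => x + y - x^2 - y^2 - x^2*y - x*y^2).
  assert (Hpos : forall y, 0 <= y -> 0 < (1+x)*(1+y)) by (intros; nra).
  assert (Ha' : ff x - ff dl < 0) by lra. clear Ha. rename Ha' into Ha.
  rewrite ff_diff in Ha by lra.
  assert (HK1 : (x - dl) * K dl < 0).
  { unfold K. apply Rmult_lt_reg_r with (/ ((1+x)*(1+dl))).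
    apply Rinv_0_lt_compat, Hpos; lra. rewrite Rmult_0_l. unfold Rdiv in Ha. lra. }
  assert (Hxd : dl < x).
  { destruct (Req_dec x dl); [subst; nra| lra]. }
  assert (HKd : K dl < 0) by nra.
  assert (HK0 : 0 <= K 0) by (unfold K; nra).
  assert (Hid : Dl * K dl - (Dl - dl) * K 0 - dl * K Dl = (1+x)*dl*Dl*(Dl-dl))
    by (unfold K; ring).
  assert (E1 : Dl * K dl < 0) by (apply Rmult_pos_neg; lra).
  assert (E2 : 0 <= (Dl - dl) * K 0) by (apply Rmult_le_pos; lra).
  assert (E3 : 0 <= (1+x)*dl*Dl*(Dl-dl)) by (repeat apply Rmult_le_pos; lra).
  assert (HdK : dl * K Dl < 0) by lra.
  assert (HKD : K Dl < 0).
  { destruct (Rlt_or_le (K Dl) 0) as [h|h]; auto.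
    assert (0 <= dl * K Dl) by (apply Rmult_le_pos; lra). lra. }
  cut (0 <= ff x - ff Dl); [lra|].
  rewrite ff_diff by lra.
  apply Rmult_le_reg_r with ((1+x)*(1+Dl)). apply Hpos; lra.
  unfold Rdiv. rewrite Rmult_assoc, Rinv_l, Rmult_1_r. fold (K Dl). nra.
  apply Rgt_not_eq, Hpos; lra.
Qed.

Lemma pair_ineq a b u D : Rabs u < 1 -> D <= ff (Rabs u) ->
  a^2 + (b - u*a)^2/(1 - u^2) >=
  (a^2 + (b - u*a)^2 + b^2 + (a - u*b)^2)/2 + D * (a^2 + b^2)/2.
Proof.
  intros Hu HD. unfold ff in HD.
  assert (H4 : 2*u*a*b <= Rabs u*(a^2+b^2)).
  { destruct (Rcase_abs u) as [Hn|Hn].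
    - rewrite Rabs_left by lra.
      assert (0 <= -u * (a+b)^2) by (apply Rmult_le_pos; [lra|apply pow2_ge_0]). nra.
    - rewrite Rabs_right by lra.
      assert (0 <= u * (a-b)^2) by (apply Rmult_le_pos; [lra|apply pow2_ge_0]). nra. }
  assert (Hut : u^2 = Rabs u^2) by (rewrite pow2_abs; ring).
  set (t := Rabs u) in *.
  assert (Ht0 : 0 <= t) by apply Rabs_pos.
  clearbody t.
  assert (Hq : 0 < 1 - u^2) by nra.
  assert (Hid : a^2 + (b - u*a)^2/(1 - u^2) - (a^2 + (b - u*a)^2 + b^2 + (a - u*b)^2)/2
     = u^2/(1-u^2) * (((b-u*a)^2 + (a-u*b)^2)/2)) by (field; lra).
  assert (Hs : ((b-u*a)^2 + (a-u*b)^2)/2 >= (1-t)^2*(a^2+b^2)/2) by nra.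
  assert (Hc : u^2/(1-u^2) * (1-t)^2 = t^2*(1-t)/(1+t)).
  { rewrite Hut. rewrite Hut in Hq. field. split; nra. }
  assert (Hw : 0 <= u^2/(1-u^2)) by (unfold Rdiv; apply Rmult_le_pos; [apply pow2_ge_0| apply Rlt_le, Rinv_0_lt_compat; lra]).
  assert (Hab : 0 <= a^2 + b^2) by nra.
  assert (u^2/(1-u^2) * (((b-u*a)^2 + (a-u*b)^2)/2) >= t^2*(1-t)/(1+t) * (a^2+b^2)/2).
  { rewrite <- Hc. apply Rle_ge. 
    replace (u ^ 2 / (1 - u ^ 2) * (1 - t) ^ 2 * (a ^ 2 + b ^ 2) / 2) with
      (u ^ 2 / (1 - u ^ 2) * ((1 - t) ^ 2 * (a ^ 2 + b ^ 2) / 2)) by (field; lra).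
    apply Rmult_le_compat_l; lra. }
  assert (D * (a^2+b^2)/2 <= t^2*(1-t)/(1+t) * (a^2+b^2)/2).
  { unfold Rdiv. apply Rmult_le_compat_r; [lra|]. apply Rmult_le_compat_r; [lra|]. 
    unfold Rdiv in HD. lra. }
  lra.
Qed.


Lemma inf_mem m n A Ainv : is_infimum (inv_bound_set m n A) Ainv ->
  forall z, Ainv * norm2 m (matvec n A z) >= norm2 n z.
Proof.
  intros [H1 H2] z.
  destruct (classic (exists M, inv_bound_set m n A M)) as [[M0 HM0]|Hne].
  2: { assert (Ainv + 1 <= Ainv); [|lra]. apply H2. intros M HM. exfalso; apply Hne; eauto. }
  set (a := norm2 m (matvec n A z)). set (c := norm2 n z).
  assert (Ha : 0 <= a) by apply sqrt_pos. assert (Hc : 0 <= c) by apply sqrt_pos.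
  destruct (Rge_or_gt (Ainv * a) c) as [h|h]; auto. exfalso.
  destruct (Req_dec a 0) as [Ha0|Ha0].
  - specialize (HM0 z). fold a c in HM0. rewrite Ha0 in *. lra.
  - assert (c / a <= Ainv).
    { apply H2. intros M HM. specialize (HM z). fold a c in HM.
      apply Rmult_le_reg_r with a; [lra|]. unfold Rdiv. rewrite Rmult_assoc, Rinv_l by lra. lra. }
    assert (c <= Ainv * a); [|lra].
    apply Rmult_le_compat_r with (r := a) in H; [|lra].
    unfold Rdiv in H. rewrite Rmult_assoc, Rinv_l, Rmult_1_r in H by lra. lra.
Qed.

Lemma fold_max_ge {T} (l : list T) g p : In p l ->
  g p <= fold_right (fun p acc => Rmax (g p) acc) 0 l.
Proof.
  induction l as [|a l IH]; simpl; [tauto|]. intros [->|H].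
  - apply Rmax_l.
  - eapply Rle_trans; [apply IH; auto| apply Rmax_r].
Qed.

Lemma fold_max_bnd {T} (l : list T) g : (forall p, In p l -> g p < 1) ->
  0 <= fold_right (fun p acc => Rmax (g p) acc) 0 l < 1.
Proof.
  induction l as [|a l IH]; simpl; intros H; [lra|].
  destruct IH as [IH1 IH2]; [intros; apply H; auto|].
  assert (g a < 1) by (apply H; auto).
  split; [eapply Rle_trans; [apply IH1|apply Rmax_r]|].
  apply Rmax_lub_lt; auto.
Qed.

Lemma fold_min_le {T} (l : list T) g p : In p l ->
  fold_right (fun p acc => Rmin (g p) acc) 1 l <= g p.
Proof.
  induction l as [|a l IH]; simpl; [tauto|]. intros [->|H].
  - apply Rmin_l.
  - eapply Rle_trans; [apply Rmin_r| apply IH; auto].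
Qed.

Lemma fold_min_ge0 {T} (l : list T) g : (forall p, 0 <= g p) ->
  0 <= fold_right (fun p acc => Rmin (g p) acc) 1 l.
Proof.
  induction l as [|a l IH]; simpl; intros H; [lra|].
  apply Rmin_glb; auto.
Qed.

Lemma jensen_c {T} (l : list T) t c : 0 < c -> (forall p, In p l -> 0 <= t p) ->
  lsum l (fun p => sqrt (t p)) <= (lsum l t / c + lsum l (fun _ => 1) * c) / 2.
Proof.
  intros Hc Ht.
  assert (H : forall p, In p l -> sqrt (t p) <= (t p / c + 1 * c) / 2).
  { intros p Hp. assert (h := Ht p Hp).
    - assert (Hs := sqrt_sqrt (t p) h). assert (Hs0 := sqrt_pos (t p)).
      set (y := sqrt (t p)) in *. clearbody y. rewrite <- Hs.
      apply Rmult_le_reg_r with (2*c); [lra|].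
      replace ((y * y / c + 1 * c) / 2 * (2 * c)) with (y*y + c*c) by (field; lra).
      assert (0 <= (y-c)*(y-c)) by apply Rle_0_sqr. lra.
  }
  eapply Rle_trans; [apply lsum_le, H|].
  right. transitivity (lsum l (fun p => (/c*/2) * t p + (c*/2) * 1)).
  apply lsum_ext; intros; field; lra.
  rewrite lsum_plus, (lsum_scal l (/c*/2) t), (lsum_scal l (c*/2) (fun _ => 1)). field; lra.
Qed.

Lemma jensen {T} (l : list T) t N s : 0 < N -> lsum l (fun _ => 1) = N ->
  (forall p, In p l -> 0 <= t p) -> 0 <= s -> lsum l t <= N * s^2 ->
  lsum l (fun p => sqrt (t p)) <= N * s.
Proof.
  intros HN HL Ht Hs Hsum.
  destruct (Rle_lt_or_eq_dec 0 s Hs) as [Hs'|Hs'].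
  - eapply Rle_trans; [apply (jensen_c l t s Hs' Ht)|]. rewrite HL.
    apply Rmult_le_reg_r with (2*s); [lra|].
    replace ((lsum l t / s + N * s) / 2 * (2 * s)) with (lsum l t + N*s*s) by (field; lra).
    replace (N * s^2) with (N*s*s) in Hsum by ring. nra.
  - subst s. rewrite Rmult_0_r. replace (N * 0^2) with 0 in Hsum by ring.
    set (X := lsum l (fun p => sqrt (t p))).
    destruct (Rle_or_lt X 0) as [h|h]; auto. exfalso.
    assert (H := jensen_c l t (X / N) ltac:(apply Rdiv_lt_0_compat; lra) Ht).
    fold X in H. rewrite HL in H.
    assert (lsum l t / (X/N) <= 0).
    { unfold Rdiv. assert (0 < / (X * / N)) by (apply Rinv_0_lt_compat, Rdiv_lt_0_compat; lra).
      assert (0 <= - lsum l t * / (X * / N)) by (apply Rmult_le_pos; lra). lra. }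
    replace (N * (X/N)) with X in H by (field; lra). lra.
Qed.

Lemma noise_bound ws wr mu W Dl : Rabs ws <= W -> Rabs wr <= W -> Rabs mu <= Dl -> Dl < 1 ->
  sqrt (ws^2 + ((wr - mu*ws)/sqrt(1-mu^2))^2) <= 3 * (W / sqrt (1 - Dl^2)).
Proof.
  intros H1 H2 H3 H4.
  assert (Hm0 : 0 <= Rabs mu) by apply Rabs_pos.
  assert (Hmu2 : mu^2 = Rabs mu^2) by (rewrite pow2_abs; ring).
  assert (Hq : 0 < 1 - mu^2) by nra.
  assert (HqD : 0 < 1 - Dl^2) by nra.
  assert (Hsq : sqrt (1-mu^2) ^2 = 1 - mu^2) by (apply pow2_sqrt; lra).
  assert (Hsp : 0 < sqrt (1-mu^2)) by (apply sqrt_lt_R0; lra).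
  replace (ws^2 + ((wr - mu*ws)/sqrt(1-mu^2))^2) with ((ws^2 + wr^2 - 2*mu*wr*ws)/(1-mu^2))
    by (unfold Rdiv; rewrite Rpow_mult_distr, pow_inv, Hsq; field; lra).
  assert (Hw0 : 0 <= W) by (eapply Rle_trans; [apply Rabs_pos| eauto]).
  assert (Hws : ws^2 <= W^2) by (rewrite <- pow2_abs; apply pow_incr; split; [apply Rabs_pos|auto]).
  assert (Hwr : wr^2 <= W^2) by (rewrite <- pow2_abs; apply pow_incr; split; [apply Rabs_pos|auto]).
  assert (Hx : - (2*mu*wr*ws) <= Rabs mu * (ws^2 + wr^2)).
  { destruct (Rcase_abs mu) as [Hn|Hn].
    - rewrite Rabs_left by lra.
      assert (0 <= -mu * (wr-ws)^2) by (apply Rmult_le_pos; [lra|apply pow2_ge_0]). nra.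
    - rewrite Rabs_right by lra.
      assert (0 <= mu * (wr+ws)^2) by (apply Rmult_le_pos; [lra|apply pow2_ge_0]). nra. }
  set (t := Rabs mu) in *. clearbody t.
  assert (Hnum : ws^2 + wr^2 - 2*mu*wr*ws <= 2*W^2*(1+t)).
  { assert (0 <= (1+t)*(W^2 - ws^2)) by (apply Rmult_le_pos; lra).
    assert (0 <= (1+t)*(W^2 - wr^2)) by (apply Rmult_le_pos; lra). lra. }
  assert (Hbound : (ws^2 + wr^2 - 2*mu*wr*ws)/(1-mu^2) <= 9 * W^2 / (1 - Dl^2)).
  { apply Rle_trans with (2*W^2*(1+t)/(1-mu^2)).
    { unfold Rdiv. apply Rmult_le_compat_r; [left; apply Rinv_0_lt_compat; lra| lra]. }
    rewrite Hmu2. replace (2 * W ^ 2 * (1 + t) / (1 - t ^ 2)) with (2*W^2/(1-t)) by (field; split; nra).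
    apply Rmult_le_reg_r with ((1-t)*(1-Dl^2)). apply Rmult_lt_0_compat; nra.
    replace (2 * W ^ 2 / (1 - t) * ((1 - t) * (1 - Dl ^ 2))) with (2*W^2*(1-Dl^2)) by (field; lra).
    replace (9 * W ^ 2 / (1 - Dl ^ 2) * ((1 - t) * (1 - Dl ^ 2))) with (9*W^2*(1-t)) by (field; lra).
    assert (0 <= W^2) by apply pow2_ge_0.
    assert (1 - Dl^2 <= 2*(1-t)) by nra.
    assert (0 <= W^2*(2*(1-t) - (1-Dl^2))) by (apply Rmult_le_pos; lra).
    assert (0 <= W^2*(1-t)) by (apply Rmult_le_pos; lra). lra. }
  replace (3 * (W / sqrt (1 - Dl ^ 2))) with (sqrt (9 * W ^ 2 / (1 - Dl ^ 2))).
  - apply sqrt_le_1_alt. auto.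
  - rewrite sqrt_div_alt by lra. 
    replace (9 * W^2) with ((3*W)^2) by ring. rewrite sqrt_pow2 by lra. field.
    apply Rgt_not_eq, sqrt_lt_R0; lra.
Qed.


Definition al n A (e : nat -> R) i := dot n (row A i) e.
Definition mu n A r s := dot n (row A r) (row A s).

Lemma rsum_lin4 n c1 c2 c3 c4 f1 f2 f3 f4 :
  rsum n (fun j => c1*f1 j + c2*f2 j + c3*f3 j + c4*f4 j)
  = c1*rsum n f1 + c2*rsum n f2 + c3*rsum n f3 + c4*rsum n f4.
Proof. induction n; simpl; [ring| rewrite IHn; ring]. Qed.

Lemma cs_unit n a e : dot n a a = 1 -> (dot n a e)^2 <= dot n e e.
Proof.
  intros Ha. assert (H := dot_ge0 n (fun j => 1 * e j + (- dot n a e) * a j)).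
  rewrite dot_sq2, Ha, (dot_sym n e a) in H. lra.
Qed.

Lemma kacz m n A e q t :
  (forall i, (i < m)%nat -> dot n (row A i) (row A i) = 1) ->
  (forall z, rsum m (fun i => (dot n (row A i) z)^2) >= INR m * q * dot n z z) ->
  (t < m)%nat ->
  rsum m (fun i => (al n A e i - mu n A i t * al n A e t)^2)
  >= INR m * q * (dot n e e - (al n A e t)^2).
Proof.
  intros Hu Hk Ht.
  set (e' := fun j => 1 * e j + (- al n A e t) * row A t j).
  specialize (Hk e').
  unfold e' in Hk at 2. rewrite dot_sq2, (Hu t Ht), (dot_sym n e (row A t)) in Hk.
  fold (al n A e t) in Hk.
  replace (1 ^ 2 * dot n e e + (- al n A e t) ^ 2 * 1 + 2 * 1 * - al n A e t * al n A e t)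
    with (dot n e e - (al n A e t)^2) in Hk by ring.
  erewrite rsum_ext; [apply Hk|].
  intros i Hi. unfold e'. rewrite dot_lin2r. unfold al, mu. ring.
Qed.

Lemma core m n A e q D :
  (forall i, (i < m)%nat -> dot n (row A i) (row A i) = 1) ->
  (forall z, rsum m (fun i => (dot n (row A i) z)^2) >= INR m * q * dot n z z) ->
  0 < q <= 1 -> 0 <= D -> (2 <= m)%nat ->
  (forall p, In p (pairs m) -> Rabs (mu n A (fst p) (snd p)) < 1 /\ D <= ff (Rabs (mu n A (fst p) (snd p)))) ->
  lsum (pairs m) (fun p => dot n e e - (al n A e (snd p))^2
      - ((al n A e (fst p) - mu n A (fst p) (snd p) * al n A e (snd p))
          / sqrt (1 - (mu n A (fst p) (snd p))^2))^2)
  <= INR (m*m - m) * (1 - (2*q - q^2 + D*q)) * dot n e e.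
Proof.
  intros Hu Hk Hq HD Hm Hp.
  set (E := dot n e e).
  set (L := fun r s => (1+D)/2 * (al n A e s)^2 + 1/2 * (al n A e r - mu n A r s * al n A e s)^2
           + (1+D)/2 * (al n A e r)^2 + 1/2 * (al n A e s - mu n A r s * al n A e r)^2).
  eapply Rle_trans.
  { apply (lsum_le _ _ (fun p => E * 1 + (-1) * L (fst p) (snd p))).
    intros [r s] Hin. cbn [fst snd]. destruct (Hp _ Hin) as [H1 H2]. simpl in H1, H2.
    assert (Hq1 : 0 < 1 - (mu n A r s)^2).
    { assert (h := Rabs_pos (mu n A r s)). rewrite <- pow2_abs. nra. }
    assert (Hs : ((al n A e r - mu n A r s * al n A e s) / sqrt (1 - mu n A r s ^ 2)) ^ 2
       = (al n A e r - mu n A r s * al n A e s)^2 / (1 - mu n A r s ^ 2)).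
    { unfold Rdiv. rewrite Rpow_mult_distr, pow_inv, pow2_sqrt by lra. reflexivity. }
    rewrite Hs.
    assert (HI := pair_ineq (al n A e s) (al n A e r) (mu n A r s) D H1 H2).
    unfold L. lra. }
  rewrite lsum_plus, (lsum_scal _ E (fun _ => 1)), (lsum_scal _ (-1) (fun p => L (fst p) (snd p))).
  rewrite lsum_pairs_len by lia.
  rewrite lsum_pairs. cbn [fst snd].
  set (Q := rsum m (fun i => (al n A e i)^2)).
  set (M := INR m).
  assert (HM : 2 <= M) by (unfold M; replace 2 with (INR 2) by (simpl; ring); apply le_INR; auto).
  assert (HN : INR (m*m - m) = M*M - M) by (unfold M; rewrite minus_INR, mult_INR by nia; ring).
  rewrite HN.
  assert (Hdiag : rsum m (fun r => L r r) = (1+D) * Q).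
  { unfold Q. rewrite <- rsum_scal. apply rsum_ext. intros r Hr. unfold L, mu.
    rewrite (Hu r Hr). field. }
  assert (Hdouble : rsum m (fun r => rsum m (fun s => L r s))
     = (1+D)/2 * (M*Q) + 1/2 * rsum m (fun r => rsum m (fun s => (al n A e r - mu n A r s * al n A e s)^2))
       + (1+D)/2 * (M*Q) + 1/2 * rsum m (fun r => rsum m (fun s => (al n A e s - mu n A r s * al n A e r)^2))).
  { rewrite (rsum_ext m _ (fun r => (1+D)/2 * Q + 1/2 * rsum m (fun s => (al n A e r - mu n A r s * al n A e s)^2)
        + (1+D)/2 * (M * (al n A e r)^2) + 1/2 * rsum m (fun s => (al n A e s - mu n A r s * al n A e r)^2))).
    - rewrite rsum_lin4, !rsum_const. unfold Q. rewrite rsum_scal. fold M. fold Q. ring.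
    - intros r Hr. unfold L. rewrite rsum_lin4, rsum_const. fold Q. fold M. ring. }
  assert (HX : rsum m (fun r => rsum m (fun s => (al n A e r - mu n A r s * al n A e s)^2))
               >= M * q * (M * E - Q)).
  { rewrite rsum_swap. apply Rle_ge.
    apply Rle_trans with (rsum m (fun s => M * q * (E - (al n A e s)^2))).
    - right. rewrite rsum_scal, rsum_minus, rsum_const. fold Q M. ring.
    - apply rsum_le. intros s Hs. apply Rge_le. apply (kacz m n A e q s Hu Hk Hs). }
  assert (HY : rsum m (fun r => rsum m (fun s => (al n A e s - mu n A r s * al n A e r)^2))
               >= M * q * (M * E - Q)).
  { apply Rle_ge.
    apply Rle_trans with (rsum m (fun r => M * q * (E - (al n A e r)^2))).
    - right. rewrite rsum_scal, rsum_minus, rsum_const. fold Q M. ring.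
    - apply rsum_le. intros r Hr. apply Rge_le.
      erewrite rsum_ext; [apply (kacz m n A e q r Hu Hk Hr)|].
      intros s Hs. unfold mu. rewrite dot_sym. reflexivity. }
  assert (HQ1 : Q >= M * q * E) by (unfold Q, M, E, al; apply Hk).
  assert (HQ2 : Q <= M * E).
  { unfold Q, M. rewrite <- rsum_const. apply rsum_le. intros i Hi. apply cs_unit. auto. }
  assert (HE : 0 <= E) by apply dot_ge0.
  rewrite Hdouble, Hdiag.
  set (X := rsum m (fun r => rsum m (fun s => (al n A e r - mu n A r s * al n A e s)^2))) in *.
  set (Y := rsum m (fun r => rsum m (fun s => (al n A e s - mu n A r s * al n A e r)^2))) in *.
  clearbody X Y Q M E L.
  destruct (Rle_or_lt 0 ((1+D)*(M-1) - M*q)) as [Hc|Hc].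
  - assert (0 <= (Q - M*q*E) * ((1+D)*(M-1) - M*q)) by (apply Rmult_le_pos; lra).
    assert (0 <= q*E*M*(1-q)) by (repeat apply Rmult_le_pos; lra).
    nra.
  - assert (0 <= (M*E - Q) * (-((1+D)*(M-1) - M*q))) by (apply Rmult_le_pos; lra).
    assert (0 <= (M*M-M)*E*((1-q)*(1-q))) by (repeat apply Rmult_le_pos; nra).
    assert (0 <= (M*M-M)*E*D*(1-q)) by (repeat apply Rmult_le_pos; nra).
    nra.
Qed.


Lemma sqrt_add_le a b : 0 <= a -> 0 <= b -> sqrt (a + b) <= sqrt a + sqrt b.
Proof.
  intros Ha Hb.
  rewrite <- (sqrt_pow2 (sqrt a + sqrt b)) by (pose proof (sqrt_pos a); pose proof (sqrt_pos b); lra).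
  apply sqrt_le_1_alt.
  replace ((sqrt a + sqrt b)^2) with (sqrt a ^2 + sqrt b ^2 + 2 * sqrt a * sqrt b) by ring.
  rewrite !pow2_sqrt by auto.
  pose proof (sqrt_pos a); pose proof (sqrt_pos b).
  assert (0 <= sqrt a * sqrt b) by (apply Rmult_le_pos; auto). lra.
Qed.

Lemma linf_ge m w i : (i < m)%nat -> Rabs (w i) <= linf m w.
Proof.
  induction m; intros Hi; [lia|]. simpl.
  destruct (Nat.eq_dec i m) as [->|Hne]; [apply Rmax_r|].
  eapply Rle_trans; [apply IHm; lia| apply Rmax_l].
Qed.

Lemma linf_ge0 m w : 0 <= linf m w.
Proof. induction m; simpl; [lra|]. eapply Rle_trans; [apply IHm| apply Rmax_l]. Qed.

Lemma geom k t : rsum k (fun i => t^i) * (1 - t) = 1 - t^k.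
Proof. induction k; simpl; [ring|]. rewrite Rmult_plus_distr_r, IHk. ring. Qed.

Lemma ff_ge0 x : 0 <= x < 1 -> 0 <= ff x.
Proof.
  intros H. unfold ff. apply Rmult_le_pos.
  - apply Rmult_le_pos; [apply pow2_ge_0| lra].
  - left. apply Rinv_0_lt_compat. lra.
Qed.


Theorem theorem4 (m n : nat) (A : nat -> nat -> R)
  (hmn : (n < m)%nat)
  (hrank : full_rank m n A)
  (hstd : standardized m n A)
  (hpar : no_parallel_rows m n A)
  (x w x0 : nat -> R) (Ainv : R)
  (hAinv : is_infimum (inv_bound_set m n A) Ainv) :
  let b := fun i => matvec n A x i + w i in
  let Rc := frob2 m n A * Ainv ^ 2 in
  let Dl := coh_max m n A in
  let dl := coh_min m n A in
  let D := Rmin (dl ^ 2 * (1 - dl) / (1 + dl)) (Dl ^ 2 * (1 - Dl) / (1 + Dl)) in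
  let eta := (1 - 1 / Rc) ^ 2 - D / Rc in
  forall k : nat,
    expect_pairs m k (fun l => norm2 n (vsub x (tsk_iter n A b x0 l)))
    <= sqrt eta ^ k * norm2 n (vsub x x0)
       + 3 / (1 - sqrt eta) * (linf m w / sqrt (1 - Dl ^ 2)).
Proof.
  intros b Rc Dl dl D eta k.
  assert (Hu : forall i, (i < m)%nat -> dot n (row A i) (row A i) = 1).
  { intros i Hi. rewrite <- norm2_sq, (hstd i Hi). ring. }
  assert (Hn : (1 <= n)%nat).
  { destruct n; [|lia]. specialize (Hu 0%nat ltac:(lia)). unfold dot in Hu. simpl in Hu. lra. }
  assert (Hm : (2 <= m)%nat) by lia.
  set (M := INR m).
  assert (HM : 2 <= M) by (unfold M; replace 2 with (INR 2) by (simpl; ring); apply le_INR; auto).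
  assert (Hinf := inf_mem m n A Ainv hAinv).
  assert (Hfrob : frob2 m n A = M).
  { unfold frob2, M. rewrite <- (Rmult_1_r (INR m)), <- rsum_const. apply rsum_ext. exact Hu. }
  assert (HA0 : 0 < Ainv).
  { specialize (Hinf (row A 0%nat)). unfold norm2 at 2 in Hinf. rewrite (Hu 0%nat ltac:(lia)), sqrt_1 in Hinf.
    pose proof (sqrt_pos (dot m (matvec n A (row A 0%nat)) (matvec n A (row A 0%nat)))).
    unfold norm2 in Hinf. destruct (Rle_or_lt Ainv 0); [|auto].
    assert (0 <= - Ainv * sqrt (dot m (matvec n A (row A 0%nat)) (matvec n A (row A 0%nat))))
      by (apply Rmult_le_pos; lra). lra. }
  assert (HRc : Rc = M * Ainv^2) by (unfold Rc; rewrite Hfrob; reflexivity).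
  set (q := 1 / Rc).
  assert (HRc0 : 0 < Rc) by (rewrite HRc; apply Rmult_lt_0_compat; [lra| apply pow_lt; auto]).
  assert (Hq0 : 0 < q) by (unfold q; apply Rdiv_lt_0_compat; lra).
  assert (Hk : forall z, rsum m (fun i => (dot n (row A i) z)^2) >= M * q * dot n z z).
  { intro z. specialize (Hinf z).
    assert (Ha := sqrt_pos (dot m (matvec n A z) (matvec n A z))).
    assert (Hc := sqrt_pos (dot n z z)).
    unfold norm2 in Hinf.
    set (a := sqrt (dot m (matvec n A z) (matvec n A z))) in *.
    set (c := sqrt (dot n z z)) in *.
    assert (Hsq : c^2 <= (Ainv * a)^2) by (apply pow_incr; lra).
    assert (Ea : a^2 = rsum m (fun i => (dot n (row A i) z)^2)).
    { unfold a. rewrite pow2_sqrt by apply dot_ge0. unfold dot at 1. apply rsum_ext. intros; unfold matvec; ring. }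
    assert (Ec : c^2 = dot n z z) by (unfold c; rewrite pow2_sqrt by apply dot_ge0; reflexivity).
    rewrite <- Ea, <- Ec. unfold q. rewrite HRc.
    apply Rle_ge. apply Rmult_le_reg_r with (Ainv^2). apply pow_lt; auto.
    replace (M * (1 / (M * Ainv ^ 2)) * c ^ 2 * Ainv ^ 2) with (c^2) by (field; lra).
    lra. }
  assert (Hq1 : q <= 1).
  { specialize (Hk (row A 0%nat)). rewrite (Hu 0%nat ltac:(lia)) in Hk.
    assert (rsum m (fun i => (dot n (row A i) (row A 0%nat))^2) <= M).
    { unfold M. rewrite <- (Rmult_1_r (INR m)), <- rsum_const. apply rsum_le. intros i Hi.
      rewrite <- (Hu 0%nat ltac:(lia)). apply cs_unit. auto. }
    apply Rmult_le_reg_l with M; lra. }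
  assert (Heta : eta = 1 - (2*q - q^2 + D*q)) by (unfold eta, q; field; lra).
  assert (Hpm : forall p, In p (pairs m) -> Rabs (mu n A (fst p) (snd p)) < 1).
  { intros p Hp. destruct (In_pairs m p Hp) as (H1 & H2 & H3). apply hpar; auto. }
  assert (HDl : 0 <= Dl < 1).
  { unfold Dl, coh_max. apply (fold_max_bnd (pairs m) (fun p => Rabs (dot n (row A (fst p)) (row A (snd p))))).
    exact Hpm. }
  assert (Hdl : 0 <= dl).
  { unfold dl, coh_min. apply (fold_min_ge0 (pairs m) (fun p => Rabs (dot n (row A (fst p)) (row A (snd p))))).
    intros; apply Rabs_pos. }
  assert (HmuDl : forall p, In p (pairs m) -> Rabs (mu n A (fst p) (snd p)) <= Dl).
  { intros p Hp. unfold Dl, coh_max. apply (fold_max_ge (pairs m) (fun p => Rabs (dot n (row A (fst p)) (row A (snd p))))). auto. }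
  assert (Hmudl : forall p, In p (pairs m) -> dl <= Rabs (mu n A (fst p) (snd p))).
  { intros p Hp. unfold dl, coh_min. apply (fold_min_le (pairs m) (fun p => Rabs (dot n (row A (fst p)) (row A (snd p))))). auto. }
  assert (HDdef : D = Rmin (ff dl) (ff Dl)) by reflexivity.
  assert (HD0 : 0 <= D).
  { rewrite HDdef. apply Rmin_glb; apply ff_ge0; split; try lra.
    assert (Hin : In (1%nat,0%nat) (pairs m)).
    { unfold pairs. apply filter_In. split; [apply in_prod; apply in_seq; lia| reflexivity]. }
    specialize (Hmudl _ Hin). specialize (Hpm _ Hin). lra. }
  assert (Hpair : forall p, In p (pairs m) -> Rabs (mu n A (fst p) (snd p)) < 1 /\ D <= ff (Rabs (mu n A (fst p) (snd p)))).
  { intros p Hp. split; auto. rewrite HDdef. apply ff_min; [auto|apply Hmudl; auto|apply HmuDl; auto|lra]. }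
  assert (Hcore := fun e => core m n A e q D Hu Hk (conj Hq0 Hq1) HD0 Hm Hpair).
  rewrite <- Heta in Hcore.
  set (W := linf m w). set (C := 3 * (W / sqrt (1 - Dl^2))).
  assert (HW : 0 <= W) by apply linf_ge0.
  assert (HC0 : 0 <= C).
  { unfold C. apply Rmult_le_pos; [lra|]. unfold Rdiv. apply Rmult_le_pos; auto.
    left; apply Rinv_0_lt_compat, sqrt_lt_R0; nra. }
  set (N := INR (m*m - m)).
  assert (HL : lsum (pairs m) (fun _ => 1) = N) by (apply lsum_pairs_len; lia).
  assert (HN : 0 < N) by (unfold N; apply lt_0_INR; nia).
  assert (Heta1 : eta < 1) by (rewrite Heta; nra).
  assert (Hse : 0 <= sqrt eta < 1).
  { split; [apply sqrt_pos|]. destruct (Rle_or_lt 0 eta).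
    - rewrite <- sqrt_1. apply sqrt_lt_1; lra.
    - rewrite sqrt_neg_0; lra. }
  assert (Hone : forall y, lsum (pairs m) (fun p => norm2 n (vsub x (tsk_step n A b p y)))
                 <= N * (sqrt eta * norm2 n (vsub x y) + C)).
  { intro y.
    set (T := fun p => dot n (vsub x y) (vsub x y) - (al n A (vsub x y) (snd p))^2
       - ((al n A (vsub x y) (fst p) - mu n A (fst p) (snd p) * al n A (vsub x y) (snd p))
          / sqrt (1 - (mu n A (fst p) (snd p))^2))^2).
    assert (HT0 : forall p, In p (pairs m) -> 0 <= T p).
    { intros [r s] Hp. destruct (In_pairs _ _ Hp) as (H1&H2&H3). cbn [fst snd] in *.
      pose proof (step_sq n A x (fun _ => 0) y r s (Hu r H1) (Hu s H2) (hpar r s H1 H2 H3)) as HS.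
      cbv beta zeta in HS.
      pose proof (dot_ge0 n (vsub x (tsk_step n A (fun i => matvec n A x i + 0) (r, s) y))) as H0.
      rewrite HS in H0. unfold T; cbn [fst snd]. unfold al, mu.
      replace (0 - dot n (row A r) (row A s) * 0) with 0 in H0 by ring.
      unfold Rdiv in H0 at 2. rewrite Rmult_0_l in H0. lra. }
    eapply Rle_trans.
    { apply (lsum_le _ _ (fun p => 1 * sqrt (T p) + C * 1)).
      intros [r s] Hp. destruct (In_pairs _ _ Hp) as (H1&H2&H3). cbn [fst snd] in *.
      pose proof (step_sq n A x w y r s (Hu r H1) (Hu s H2) (hpar r s H1 H2 H3)) as HS.
      cbv beta zeta in HS. fold b in HS.
      unfold norm2.
      assert (Hdot : dot n (vsub x (tsk_step n A b (r, s) y)) (vsub x (tsk_step n A b (r, s) y))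
         = T (r,s) + ((w s)^2 + ((w r - mu n A r s * w s)/sqrt(1 - (mu n A r s)^2))^2)).
      { rewrite HS. unfold T, al, mu; cbn [fst snd]. ring. }
      rewrite Hdot.
      eapply Rle_trans; [apply sqrt_add_le|].
      - apply HT0; auto.
      - apply Rplus_le_le_0_compat; apply pow2_ge_0.
      - rewrite Rmult_1_l, Rmult_1_r. apply Rplus_le_compat.
        + right. reflexivity.
        + apply noise_bound.
          * apply linf_ge; auto.
          * apply linf_ge; auto.
          * apply (HmuDl (r,s) Hp).
          * lra. }
    rewrite lsum_plus, (lsum_scal _ 1 (fun p => sqrt (T p))), (lsum_scal _ C (fun _ => 1)), HL.
    assert (HJ : lsum (pairs m) (fun p => sqrt (T p)) <= N * (sqrt eta * norm2 n (vsub x y))).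
    { assert (HcT := Hcore (vsub x y)). fold N in HcT.
      assert (HnE := norm2_sq n (vsub x y)).
      assert (Hn0 : 0 <= norm2 n (vsub x y)) by apply sqrt_pos.
      destruct (Rle_or_lt 0 eta) as [He|He].
      - apply jensen; auto.
        + apply Rmult_le_pos; auto. apply sqrt_pos.
        + rewrite Rpow_mult_distr, pow2_sqrt, HnE by auto. unfold T. lra.
      - eapply Rle_trans.
        + apply (jensen _ T N 0); auto; [lra|].
          replace (N * 0^2) with 0 by ring. unfold T.
          assert (0 <= dot n (vsub x y) (vsub x y)) by apply dot_ge0.
          assert (N * eta * dot n (vsub x y) (vsub x y) <= 0); [|lra].
          assert (0 <= N * (- eta) * dot n (vsub x y) (vsub x y)) by (repeat apply Rmult_le_pos; lra). lra.
        + rewrite Rmult_0_r. apply Rmult_le_pos; [lra|]. apply Rmult_le_pos; auto; apply sqrt_pos. }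
    lra. }
  assert (Hind : forall k y, expect_pairs m k (fun l => norm2 n (vsub x (tsk_iter n A b y l)))
     <= sqrt eta ^ k * norm2 n (vsub x y) + C * rsum k (fun i => sqrt eta ^ i)).
  { clear k. induction k as [|k IH]; intro y.
    - cbn [expect_pairs tsk_iter rsum pow]. lra.
    - change (expect_pairs m (S k) (fun l => norm2 n (vsub x (tsk_iter n A b y l))))
        with (/ INR (m*m - m) * lsum (pairs m) (fun p => expect_pairs m k
               (fun l => norm2 n (vsub x (tsk_iter n A b (tsk_step n A b p y) l))))).
      fold N.
      eapply Rle_trans.
      { apply Rmult_le_compat_l; [left; apply Rinv_0_lt_compat; auto|].
        apply (lsum_le _ _ (fun p => sqrt eta ^ k * norm2 n (vsub x (tsk_step n A b p y))
                              + (C * rsum k (fun i => sqrt eta ^ i)) * 1)).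
        intros p _. rewrite Rmult_1_r. apply IH. }
      rewrite lsum_plus, (lsum_scal _ (sqrt eta ^ k)), (lsum_scal _ (C * rsum k (fun i => sqrt eta ^ i)) (fun _ => 1)), HL.
      assert (Hp : 0 <= sqrt eta ^ k) by (apply pow_le; lra).
      assert (H1 := Rmult_le_compat_l _ _ _ Hp (Hone y)).
      apply Rmult_le_reg_l with N; auto.
      rewrite <- Rmult_assoc, Rinv_r, Rmult_1_l by lra.
      cbn [rsum pow].
      replace (N * (sqrt eta * sqrt eta ^ k * norm2 n (vsub x y) + C * (rsum k (fun i : nat => sqrt eta ^ i) + sqrt eta ^ k)))
        with (sqrt eta ^ k * (N * (sqrt eta * norm2 n (vsub x y) + C)) + C * rsum k (fun i : nat => sqrt eta ^ i) * N) by ring.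
      lra. }
  eapply Rle_trans; [apply Hind|].
  apply Rplus_le_compat_l.
  assert (Hg := geom k (sqrt eta)).
  assert (Hp : 0 <= sqrt eta ^ k) by (apply pow_le; lra).
  assert (Hs : rsum k (fun i => sqrt eta ^ i) <= 1 / (1 - sqrt eta)).
  { apply Rmult_le_reg_r with (1 - sqrt eta); [lra|]. rewrite Hg.
    replace (1 / (1 - sqrt eta) * (1 - sqrt eta)) with 1 by (field; lra). lra. }
  replace (3 / (1 - sqrt eta) * (W / sqrt (1 - Dl ^ 2))) with (C * (1 / (1 - sqrt eta)))
    by (assert (0 < sqrt (1 - Dl^2)) by (apply sqrt_lt_R0; nra);
        unfold C, W; field; split; lra).
  apply Rmult_le_compat_l; auto.
Qed.
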